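(* Let $R$ be a noetherian integral domain, $n\ge1$, $R[n]=R[t]/(t^n)$, and let $(x_1,\ldots,x_p)$ be a regular sequence in $R[n]$. Then the ideal $I$ of $R[n]$ generated by $x_1,\ldots,x_p$ is a balanced $R[n]$-module.
   Context: For an $R[n]$-module $M$ of finite type and $0\le i\le n$, let $M^{(i)}=\{m\in M: t^im=0\}$ (the second canonical filtration $0=M^{(0)}\subset M^{(1)}\subset\cdots\subset M^{(n)}=M$), and for $0<i\le n$ let $G^{(i)}(M)=M^{(i)}/M^{(i-1)}$, an $R$-module. For $1\le i\le n-1$, multiplication by $t$ induces an injective morphism of $R$-modules $\lambda_i:G^{(i+1)}(M)\to G^{(i)}(M)$. Set $\boldsymbol{\lambda}(M)=\lambda_1\circ\cdots\circ\lambda_{n-1}:G^{(n)}(M)\to G^{(1)}(M)$. $M$ is called balanced if $\boldsymbol{\lambda}(M)$ is surjective. *)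

(* Defs.v *)
From HB Require Import structures.
From mathcomp Require Import all_boot all_order all_algebra.
Set Implicit Arguments. Unset Strict Implicit. Unset Printing Implicit Defensive.
Import GRing.Theory.
Local Open Scope ring_scope.

Definition genI (A : comNzRingType) (s : seq A) (a : A) : Prop :=
  exists c : 'I_(size s) -> A, a = \sum_(i < size s) c i * s`_i.

Definition is_ideal (A : comNzRingType) (I : A -> Prop) : Prop :=
  [/\ I 0, (forall x y, I x -> I y -> I (x + y)) & (forall a x, I x -> I (a * x))].

Definition noetherian (A : comNzRingType) : Prop :=
  forall I : A -> Prop, is_ideal I -> exists s : seq A, forall a, I a <-> genI s a.

(* R[n] = R[t]/(t^n).  Elements of R[n] are represented by polynomials in  *)
(* {poly R}; an ideal J of R[n] is represented by its preimage in R[t],    *)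
(* which contains t^n.                                                     *)

Definition zeroRn (R : comNzRingType) (n : nat) (p : {poly R}) : Prop :=
  genI [:: 'X^n] p.

Definition idealRn (R : comNzRingType) (n : nat) (s : seq {poly R}) : {poly R} -> Prop :=
  genI ('X^n :: s).

Definition regular_seq_Rn (R : comNzRingType) (n : nat) (xs : seq {poly R}) : Prop :=
  (forall i : nat, (i < size xs)%N -> forall y : {poly R},
     idealRn n (take i xs) (xs`_i * y) -> idealRn n (take i xs) y)
  /\ ~ idealRn n xs 1.

(* Second canonical filtration of a submodule M of R[n] (M given by its
   preimage Mpre in R[t]): M^(i) = {m in M : t^i m = 0}. *)
Definition filtRn (R : comNzRingType) (n : nat) (Mpre : {poly R} -> Prop)
  (i : nat) (m : {poly R}) : Prop :=
  Mpre m /\ zeroRn n ('X^i * m).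

(* G^(i)(M) = M^(i)/M^(i-1): two representatives in M^(i) define the same
   element of G^(i)(M) iff their difference lies in M^(i-1). *)
Definition eqG (R : comNzRingType) (n : nat) (Mpre : {poly R} -> Prop)
  (i : nat) (m m' : {poly R}) : Prop :=
  filtRn n Mpre i.-1 (m - m').

(* lambda_i : G^(i+1)(M) -> G^(i)(M), induced by multiplication by t
   (on representatives). *)
Definition lambdaRn (R : comNzRingType) (m : {poly R}) : {poly R} := 'X * m.

(* boldlambda(M) = lambda_1 o ... o lambda_{n-1} : G^(n)(M) -> G^(1)(M),
   on representatives. *)
Definition blambdaRn (R : comNzRingType) (n : nat) (m : {poly R}) : {poly R} :=
  iter n.-1 (@lambdaRn R) m.

Definition balancedRn (R : comNzRingType) (n : nat) (Mpre : {poly R} -> Prop) : Prop :=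
  forall g : {poly R}, filtRn n Mpre 1 g ->
    exists m : {poly R}, filtRn n Mpre n m /\ eqG n Mpre 1 (blambdaRn n m) g.

(* Main.v *)
Require Import Defs.
From HB Require Import structures.
From mathcomp Require Import all_boot all_order all_algebra.
Local Open Scope ring_scope.
From mathcomp Require Import ring.
Import GRing.Theory.

Section GenI.
Variable A : comNzRingType.
Implicit Types (s : seq A) (a b x : A).

Lemma genI0 s : genI s 0.
Proof. by exists (fun _ => 0); rewrite big1 // => i _; rewrite mul0r. Qed.

Lemma genID s a b : genI s a -> genI s b -> genI s (a + b).
Proof.
case=> ca -> [cb ->]; exists (fun i => ca i + cb i).
by rewrite -big_split /=; apply: eq_bigr => i _; rewrite mulrDl.
Qed.

Lemma genIM s r a : genI s a -> genI s (r * a).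
Proof.
case=> ca ->; exists (fun i => r * ca i).
by rewrite mulr_sumr; apply: eq_bigr => i _; rewrite mulrA.
Qed.

Lemma genIN s a : genI s a -> genI s (- a).
Proof. by move=> H; rewrite -mulN1r; apply: genIM. Qed.

Lemma genIB s a b : genI s a -> genI s b -> genI s (a - b).
Proof. by move=> Ha Hb; apply: genID => //; apply: genIN. Qed.

Lemma genI_nth s i : (i < size s)%N -> genI s s`_i.
Proof.
move=> Hi; exists (fun j : 'I_(size s) => ((val j == i)%:R : A)).
rewrite (bigD1 (Ordinal Hi)) //= eqxx mul1r big1 ?addr0 // => j Hj.
have -> : (val j == i) = false.
  by apply/negbTE; apply: contra Hj => /eqP Hj; apply/eqP/val_inj.
by rewrite mul0r.
Qed.

Lemma sum_cast {m N : nat} (H : m = N) (F : 'I_m -> A) :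
  \sum_(i < m) F i = \sum_(i < N) F (cast_ord (esym H) i).
Proof. by case: N / H; apply: eq_bigr => i _; rewrite cast_ord_id. Qed.

Lemma genI_rcons s x a :
  genI (rcons s x) a <-> exists j b, genI s j /\ a = j + b * x.
Proof.
split.
  case=> c ->.
  have Hs : size (rcons s x) = (size s).+1 by rewrite size_rcons.
  pose c' := fun i : 'I_(size s).+1 => c (cast_ord (esym Hs) i).
  have -> : \sum_(i < size (rcons s x)) c i * (rcons s x)`_i =
            \sum_(i < (size s).+1) c' i * (rcons s x)`_i.
    by rewrite (sum_cast Hs).
  rewrite big_ord_recr /=.
  exists (\sum_(i < size s) c' (widen_ord (leqnSn _) i) * (rcons s x)`_i).
  exists (c' ord_max); split; last by rewrite nth_rcons ltnn eqxx.
  exists (fun i => c' (widen_ord (leqnSn _) i)).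
  by apply: eq_bigr => i _; rewrite nth_rcons ltn_ord.
case=> j [b [[c ->] ->]].
have Hs : size (rcons s x) = (size s).+1 by rewrite size_rcons.
pose d := fun i : 'I_(size s).+1 =>
  match split (cast_ord (esym (addn1 (size s))) i) with inl k => c k | inr _ => b end.
exists (fun i => d (cast_ord Hs i)).
transitivity (\sum_(i < (size s).+1) d i * (rcons s x)`_i); last first.
  rewrite (sum_cast Hs); apply: eq_bigr => i _; congr (d _ * _).
  by apply: val_inj.
rewrite big_ord_recr /= nth_rcons ltnn eqxx; congr (_ + _ * _).
  apply: eq_bigr => i _; rewrite nth_rcons ltn_ord /d.
  case: splitP => [k /= Hk|k /= Hk]; last by move: (ltn_ord i); rewrite Hk -ltn_subRL subnn.
  by congr (c _ * _); apply: val_inj.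
rewrite /d; case: splitP => [k /= Hk|//].
by move: (ltn_ord k); rewrite -Hk ltnn.
Qed.

Lemma genI_mono s x a : genI s a -> genI (rcons s x) a.
Proof. by move=> H; apply/genI_rcons; exists a, 0; rewrite mul0r addr0. Qed.

Lemma genI_last s x : genI (rcons s x) x.
Proof. by apply/genI_rcons; exists 0, 1; rewrite mul1r add0r; split => //; apply: genI0. Qed.

Lemma genI1 a b : genI [:: a] b <-> exists c, b = c * a.
Proof.
split; first by case=> c ->; exists (c ord0); rewrite big_ord1.
by case=> c ->; exists (fun _ => c); rewrite big_ord1.
Qed.

End GenI.

Section Main.
Variable R : comNzRingType.
Variable n : nat.

Definition PropP (J : {poly R} -> Prop) :=
  forall k y, (k <= n)%N -> J ('X^k * y) -> exists v, J (y - 'X^(n - k) * v).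

Lemma Xn_cancel k (a b : {poly R}) : 'X^k * a = 'X^k * b -> a = b.
Proof. exact: (monic_lreg (monicXn R k)). Qed.

Lemma base_P : PropP (genI [:: 'X^n]).
Proof.
move=> k y Hk /genI1 [c Hc]; exists c.
have -> : y = 'X^(n - k) * c.
  apply: (@Xn_cancel k); rewrite Hc mulrA -exprD subnKC // mulrC //.
by rewrite subrr; apply: genI0.
Qed.

Lemma step_P (s : seq {poly R}) (x : {poly R}) :
  genI s 'X^n ->
  (forall y, genI s (x * y) -> genI s y) ->
  PropP (genI s) -> PropP (genI (rcons s x)).
Proof.
move=> HXn Hreg HP k y Hk /genI_rcons [j [z [Hj Heq]]].
have Hz : genI s ('X^(n - k) * z).
  apply: Hreg.
  have -> : x * ('X^(n - k) * z) = 'X^n * y - 'X^(n - k) * j.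
    rewrite -[in 'X^n](subnK Hk) exprD -mulrA Heq; ring.
  apply: genIB; [by rewrite mulrC; apply: genIM | by apply: genIM].
have [w Hw] := HP (n - k)%N z (leq_subr _ _) Hz.
rewrite subKn // in Hw.
have Hy : genI s ('X^k * (y - x * w)).
  have -> : 'X^k * (y - x * w) = j + x * (z - 'X^k * w).
    rewrite mulrBr Heq; ring.
  by apply: genID => //; apply: genIM.
have [v Hv] := HP k _ Hk Hy.
exists v; apply/genI_rcons; exists (y - x * w - 'X^(n - k) * v), w.
by split=> //; rewrite (mulrC w x) addrAC subrK.
Qed.

End Main.

Lemma iter_lambda (R : comNzRingType) k (m : {poly R}) :
  iter k (@lambdaRn R) m = 'X^k * m.
Proof.
elim: k => [|k IH] /=; first by rewrite expr0 mul1r.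
by rewrite IH /lambdaRn exprS mulrA.
Qed.

Theorem proposition3p7p2 (R : idomainType) (n : nat) (xs : seq {poly R}) :
  noetherian R -> (1 <= n)%N -> regular_seq_Rn n xs ->
  balancedRn n (idealRn n xs).
Proof.
move=> _ Hn [Hreg _].
have HP : forall i, (i <= size xs)%N -> @PropP R n (genI ('X^n :: take i xs)).
  elim=> [|i IH] Hi; first by rewrite take0; apply: base_P.
  rewrite (take_nth 0) // -rcons_cons; apply: step_P.
  - by apply: (@genI_nth _ ('X^n :: take i xs) 0).
  - exact: Hreg.
  - by apply: IH; apply: ltnW.
have HJ := HP _ (leqnn _); rewrite take_size in HJ.
move=> g [Hg /genI1 [c Hc]].
have Hgc : g = 'X^(n.-1) * c.
  apply: (@Xn_cancel R 1); rewrite expr1 Hc mulrA -exprS prednK // mulrC.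
  done.
rewrite Hgc in Hg.
have [v Hv] := HJ n.-1 c (leq_pred _) Hg.
have Hn1 : (n - n.-1 = 1)%N by rewrite -subn1 subKn.
rewrite Hn1 expr1 in Hv.
exists (c - 'X * v); split.
  split => //; apply/genI1; exists (c - 'X * v); by rewrite mulrC.
rewrite /eqG /blambdaRn iter_lambda.
have E : 'X^(n.-1) * (c - 'X * v) - g = - ('X^n * v).
  rewrite Hgc mulrBr mulrA -exprSr prednK //; ring.
split.
  rewrite E; apply: genIN; rewrite mulrC; apply: genIM.
  by apply: (@genI_nth _ ('X^n :: xs) 0).
rewrite E expr0 mul1r; apply/genI1; exists (- v); by rewrite mulNr mulrC.
Qed.
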